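(* Let $\mathcal H_S,\mathcal H_E$ be finite-dimensional Hilbert spaces, $|\psi_i\rangle\in\mathcal H_S$ and $|\phi_i^E\rangle\in\mathcal H_E$ unit vectors, $x\mapsto U_x^{SE}$ a continuously differentiable family of unitaries on $\mathcal H_S\otimes\mathcal H_E$, and $\{|\pi_\omega^E\rangle\}_{\omega\in\Omega}$ an orthonormal basis of $\mathcal H_E$, with $\Omega$ partitioned into a retained set $\checkmark$ and a discarded set $\times$. Assume the perpendicular gauge condition $\langle \Psi_x^{SE}|\partial_x\Psi_x^{SE}\rangle=0$. Suppose that (i) $\langle\tilde\psi_{x|\omega}|\partial_x\tilde\psi_{x|\omega}\rangle=0$ for all $\omega\in\checkmark$; (ii) $|\partial_x\tilde\psi_{x|\omega}\rangle=0$ for all $\omega\in\times$; and that $p(\omega|x)>0$ for every $\omega\in\checkmark$ with $|\partial_x\tilde\psi_{x|\omega}\rangle\neq0$. Then the measurement encoding is lossless, i.e. $$\sum_{\omega\in\checkmark,\ p(\omega|x)>0} p(\omega|x)\,I(\sigma_{x|\omega}) = I(|\Psi_x^{SE}\rangle).$$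
   Context: Setup: $|\Psi_x^{SE}\rangle=U_x^{SE}(|\psi_i\rangle\otimes|\phi_i^E\rangle)$. Kraus (measurement) operators on $\mathcal H_S$: $M_{\omega,x}=\langle\pi_\omega^E|U_x^{SE}|\phi_i^E\rangle$ (partial inner product over the environment). $|\tilde\psi_{x|\omega}\rangle=M_{\omega,x}|\psi_i\rangle$, $p(\omega|x)=\langle\tilde\psi_{x|\omega}|\tilde\psi_{x|\omega}\rangle$, and for $p(\omega|x)>0$ the post-selected state is the pure state $\sigma_{x|\omega}=|\tilde\psi_{x|\omega}\rangle\langle\tilde\psi_{x|\omega}|/p(\omega|x)$. For a pure state $|\phi_x\rangle$ (normalized), the quantum Fisher information is $I(|\phi_x\rangle)=4(\langle\partial_x\phi_x|\partial_x\phi_x\rangle-|\langle\phi_x|\partial_x\phi_x\rangle|^2)$; $I(\sigma_{x|\omega})$ is the QFI of the normalized pure state $\tilde\psi_{x|\omega}/\sqrt{p(\omega|x)}$. $I^Q:=I(|\Psi_x^{SE}\rangle)$. *)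

(* Defs.v *)
(* Finite-dimensional Hilbert spaces are modelled
   as C^S, C^E for finite index (basis) types S, E; vectors are functions
   S -> R[i], operators are matrices given as functions I -> I -> R[i]. *)
From mathcomp Require Import all_boot all_algebra all_classical all_reals all_analysis.
From mathcomp.real_closed Require Import complex.
Import numFieldNormedType.Exports.
Set Implicit Arguments. Unset Strict Implicit. Unset Printing Implicit Defensive.
Import GRing.Theory Num.Theory.
Local Open Scope ring_scope.
Local Open Scope complex_scope.

Section QDefs.
Variable R : realType.

Definition cdot (I : finType) (u v : I -> R[i]) : R[i] :=
  \sum_(i : I) conjc (u i) * v i.

Definition abs2 (z : R[i]) : R := complex.Re z ^+ 2 + complex.Im z ^+ 2.

Definition cderiv (I : finType) (f : R -> I -> R[i]) (x : R) : I -> R[i] :=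
  fun i => (derive1 (fun t => complex.Re (f t i)) x) +i* (derive1 (fun t => complex.Im (f t i)) x).

Definition QFI_pure (I : finType) (f : R -> I -> R[i]) (x : R) : R :=
  4 * (complex.Re (cdot (cderiv f x) (cderiv f x)) - abs2 (cdot (f x) (cderiv f x))).

Definition unitary_op (I : finType) (M : I -> I -> R[i]) : Prop :=
  forall a b : I, \sum_(k : I) conjc (M k a) * M k b = (a == b)%:R.

Definition onb_family (O E : finType) (pi : O -> E -> R[i]) : Prop :=
  (forall w w' : O, cdot (pi w) (pi w') = (w == w')%:R) /\
  (forall v : E -> R[i], exists c : O -> R[i],
      forall e : E, v e = \sum_(w : O) c w * pi w e).

Definition C1_family (I : finType) (U : R -> I -> I -> R[i]) : Prop :=
  forall a b : I,
    (forall t : R, derivable (fun s => complex.Re (U s a b)) t 1) /\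
    continuous (derive1 (fun s => complex.Re (U s a b)) : R -> R) /\
    (forall t : R, derivable (fun s => complex.Im (U s a b)) t 1) /\
    continuous (derive1 (fun s => complex.Im (U s a b)) : R -> R).

Variables (S E O : finType).

Definition joint_state (U : R -> S * E -> S * E -> R[i]) (psi : S -> R[i])
  (phi : E -> R[i]) : R -> S * E -> R[i] :=
  fun x a => \sum_(b : S * E) U x a b * (psi b.1 * phi b.2).

(* Kraus operator M_{w,x} = <pi_w| U_x |phi> (partial inner product) *)
Definition kraus (U : R -> S * E -> S * E -> R[i]) (phi : E -> R[i])
  (pi : O -> E -> R[i]) (w : O) (x : R) : S -> S -> R[i] :=
  fun s s' => \sum_(e : E) \sum_(e' : E) conjc (pi w e) * U x (s, e) (s', e') * phi e'.

Definition post_state U psi phi pi (w : O) : R -> S -> R[i] :=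
  fun x s => \sum_(s' : S) kraus U phi pi w x s s' * psi s'.

Definition prob U psi phi pi (w : O) (x : R) : R :=
  complex.Re (cdot (post_state U psi phi pi w x) (post_state U psi phi pi w x)).

Definition normalized_post U psi phi pi (w : O) : R -> S -> R[i] :=
  fun x s => post_state U psi phi pi w x s *
             ((Num.sqrt (prob U psi phi pi w x))^-1)%:C.

End QDefs.

(* Main.v *)
Require Import Defs.
From mathcomp Require Import all_boot all_algebra all_classical all_reals all_analysis.
From mathcomp.real_closed Require Import complex.
From mathcomp Require Import lra ring.
Import numFieldNormedType.Exports.
Import GRing.Theory Num.Theory.
Local Open Scope ring_scope.
Local Open Scope complex_scope.

Set Implicit Arguments. Unset Strict Implicit.
Section T.
Variable R : realType.
Local Notation RE := (@complex.Re R).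
Local Notation IM := (@complex.Im R).
Lemma reM (a b : R[i]) : RE (a * b) = RE a * RE b - IM a * IM b.
Proof. by case: a => a1 a2; case: b => b1 b2. Qed.
Lemma imM (a b : R[i]) : IM (a * b) = RE a * IM b + IM a * RE b.
Proof. by case: a => a1 a2; case: b => b1 b2. Qed.
Lemma reD (a b : R[i]) : RE (a + b) = RE a + RE b.
Proof. by case: a => a1 a2; case: b => b1 b2. Qed.
Lemma imD (a b : R[i]) : IM (a + b) = IM a + IM b.
Proof. by case: a => a1 a2; case: b => b1 b2. Qed.
Lemma reC (a : R[i]) : RE (conjc a) = RE a.
Proof. by case: a. Qed.
Lemma imC (a : R[i]) : IM (conjc a) = - IM a.
Proof. by case: a. Qed.

Definition cder (f : R -> R[i]) (x : R) (d : R[i]) :=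
  is_derive x 1 (fun t => RE (f t)) (RE d) /\ is_derive x 1 (fun t => IM (f t)) (IM d).

Lemma cder_uniq f x d : cder f x d ->
  (derive1 (fun t => RE (f t)) x) +i* (derive1 (fun t => IM (f t)) x) = d.
Proof.
case=> [[_ e1] [_ e2]]; rewrite !derive1E e1 e2; by case: d {e1 e2}.
Qed.

Lemma cder_cderiv (I : finType) (F : R -> I -> R[i]) x i d :
  cder (fun t => F t i) x d -> cderiv F x i = d.
Proof. by move=> h; rewrite /cderiv (cder_uniq h). Qed.

Lemma cder_cst x (c : R[i]) : cder (fun _ => c) x 0.
Proof. split; exact: is_derive_cst. Qed.

Lemma cder_add f g x d e : cder f x d -> cder g x e -> cder (fun t => f t + g t) x (d + e).
Proof.
case=> h1 h2 [k1 k2]; split.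
- have -> : (fun t => RE (f t + g t)) = (fun t => RE (f t)) + (fun t => RE (g t)).
    by apply/funext => t; rewrite reD.
  rewrite reD; exact: is_deriveD.
- have -> : (fun t => IM (f t + g t)) = (fun t => IM (f t)) + (fun t => IM (g t)).
    by apply/funext => t; rewrite imD.
  rewrite imD; exact: is_deriveD.
Qed.

Lemma cder_sum (J : Type) (r : seq J) (F : J -> R -> R[i]) (D : J -> R[i]) x :
  (forall j, cder (F j) x (D j)) ->
  cder (fun t => \sum_(j <- r) F j t) x (\sum_(j <- r) D j).
Proof.
move=> H; elim: r => [|a r IH].
  have -> : (fun t => \sum_(j <- [::]) F j t) = fun _ => 0.
    by apply/funext => t; rewrite big_nil.
  rewrite big_nil; exact: cder_cst.
have -> : (fun t => \sum_(j <- a :: r) F j t) = fun t => F a t + \sum_(j <- r) F j t.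
  by apply/funext => t; rewrite big_cons.
rewrite big_cons; exact: cder_add.
Qed.

Lemma cder_mul f g x d e : cder f x d -> cder g x e ->
  cder (fun t => f t * g t) x (f x * e + d * g x).
Proof.
case=> h1 h2 [k1 k2]; split.
- have -> : (fun t => RE (f t * g t)) =
     (fun t => RE (f t)) * (fun t => RE (g t)) - (fun t => IM (f t)) * (fun t => IM (g t)).
    by apply/funext => t; rewrite reM.
  apply: is_derive_eq (is_deriveB (is_deriveM h1 k1) (is_deriveM h2 k2)) _.
  rewrite reD !reM /GRing.scale /=; lra.
- have -> : (fun t => IM (f t * g t)) =
     (fun t => RE (f t)) * (fun t => IM (g t)) + (fun t => IM (f t)) * (fun t => RE (g t)).
    by apply/funext => t; rewrite imM.
  apply: is_derive_eq (is_deriveD (is_deriveM h1 k2) (is_deriveM h2 k1)) _.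
  rewrite imD !imM /GRing.scale /=; lra.
Qed.

Lemma cder_conj f x d : cder f x d -> cder (fun t => conjc (f t)) x (conjc d).
Proof.
case=> h1 h2; split.
- have -> : (fun t => RE (conjc (f t))) = (fun t => RE (f t)).
    by apply/funext => t; rewrite reC.
  by rewrite reC.
- have -> : (fun t => IM (conjc (f t))) = - (fun t => IM (f t)).
    by apply/funext => t; rewrite imC.
  rewrite imC; exact: is_deriveN.
Qed.

Lemma cder_real (h : R -> R) (x dh : R) : is_derive x 1 h dh -> cder (fun t => (h t)%:C) x dh%:C.
Proof. by move=> H; split; [exact: H|exact: is_derive_cst]. Qed.
End T.
Section T2.
Variable R : realType.
Local Notation RE := (@complex.Re R).
Local Notation IM := (@complex.Im R).
Variables (S E O : finType).

Lemma cder_mulr f x d (c : R[i]) : cder f x d -> cder (fun t => f t * c) x (d * c).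
Proof. move=> H; have := cder_mul H (cder_cst x c); by rewrite mulr0 add0r. Qed.
Lemma cder_mull f x d (c : R[i]) : cder f x d -> cder (fun t => c * f t) x (c * d).
Proof. move=> H; have := cder_mul (cder_cst x c) H; by rewrite mul0r addr0. Qed.

Lemma pairsum (G : S * E -> R[i]) : \sum_(b : S * E) G b = \sum_(s : S) \sum_(e : E) G (s, e).
Proof. by rewrite pair_big; apply: eq_bigr => -[]. Qed.

Lemma joint_der (U : R -> S * E -> S * E -> R[i]) psi phi x a :
  C1_family U -> cder (fun t => joint_state U psi phi t a) x (cderiv (joint_state U psi phi) x a).
Proof.
move=> HC.
pose dU a b := derive1 (fun s => RE (U s a b)) x +i* derive1 (fun s => IM (U s a b)) x.
have HU : forall a b, cder (fun t => U t a b) x (dU a b).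
  move=> a' b; have [d1 [_ [d2 _]]] := HC a' b; split; rewrite /= derive1E.
  - exact: derivableP (d1 x).
  - exact: derivableP (d2 x).
suff H : cder (fun t => joint_state U psi phi t a) x
   (\sum_(b : S * E) dU a b * (psi b.1 * phi b.2)) by rewrite (cder_cderiv H).
apply: cder_sum => b; exact: cder_mulr.
Qed.

Lemma post_eq (U : R -> S * E -> S * E -> R[i]) psi phi (pi : O -> E -> R[i]) w t s :
  post_state U psi phi pi w t s = \sum_(e : E) conjc (pi w e) * joint_state U psi phi t (s, e).
Proof.
rewrite /post_state /kraus /joint_state.
transitivity (\sum_(e : E) \sum_(s' : S) \sum_(e' : E)
   conjc (pi w e) * U t (s,e) (s',e') * phi e' * psi s').
  under eq_bigr => s' _ do rewrite mulr_suml.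
  under eq_bigr => s' _ do under eq_bigr => e _ do rewrite mulr_suml.
  by rewrite exchange_big.
apply: eq_bigr => e _; rewrite pairsum mulr_sumr; apply: eq_bigr => s' _.
rewrite mulr_sumr; apply: eq_bigr => e' _ /=; ring.
Qed.

Lemma post_der (U : R -> S * E -> S * E -> R[i]) psi phi (pi : O -> E -> R[i]) w x s :
  C1_family U ->
  cder (fun t => post_state U psi phi pi w t s) x (cderiv (post_state U psi phi pi w) x s) /\
  cderiv (post_state U psi phi pi w) x s =
    \sum_(e : E) conjc (pi w e) * cderiv (joint_state U psi phi) x (s, e).
Proof.
move=> HC.
have H : cder (fun t => post_state U psi phi pi w t s) x
   (\sum_(e : E) conjc (pi w e) * cderiv (joint_state U psi phi) x (s, e)).
  have -> : (fun t => post_state U psi phi pi w t s) =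
    (fun t => \sum_(e : E) conjc (pi w e) * joint_state U psi phi t (s, e)).
    by apply/funext => t; rewrite post_eq.
  apply: cder_sum => e; apply: cder_mull; exact: joint_der.
by rewrite (cder_cderiv H).
Qed.

End T2.
Section T3.
Variable R : realType.
Local Notation RE := (@complex.Re R).
Local Notation IM := (@complex.Im R).

Lemma conjcM' (a b : R[i]) : conjc (a * b) = conjc a * conjc b.
Proof. by case: a => a1 a2; case: b => b1 b2 /=; congr (_ +i* _); ring. Qed.
Lemma conjcD' (a b : R[i]) : conjc (a + b) = conjc a + conjc b.
Proof. by case: a => a1 a2; case: b => b1 b2 /=; congr (_ +i* _); ring. Qed.
Lemma conjc0' : conjc (0 : R[i]) = 0.
Proof. by rewrite /= oppr0. Qed.
Lemma conjcK' (a : R[i]) : conjc (conjc a) = a.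
Proof. by case: a => a1 a2 /=; rewrite opprK. Qed.

Lemma cdot_conj (I : finType) (u v : I -> R[i]) : conjc (cdot u v) = cdot v u.
Proof.
rewrite /cdot (big_morph _ conjcD' conjc0'); apply: eq_bigr => i _.
by rewrite conjcM' conjcK' mulrC.
Qed.

Lemma cdot_sumr (I J : finType) (u : I -> R[i]) (c : J -> R[i]) (B : J -> I -> R[i]) :
  cdot u (fun i => \sum_j c j * B j i) = \sum_j c j * cdot u (B j).
Proof.
rewrite /cdot; under eq_bigr do rewrite mulr_sumr.
rewrite exchange_big; apply: eq_bigr => j _; rewrite mulr_sumr; apply: eq_bigr => i _; ring.
Qed.

Lemma parseval (O E : finType) (pi : O -> E -> R[i]) (v : E -> R[i]) :
  onb_family pi -> \sum_w conjc (cdot (pi w) v) * cdot (pi w) v = cdot v v.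
Proof.
case=> orth span; have [c hc] := span v.
have ev : v = fun e => \sum_w c w * pi w e by apply/funext.
have cw : forall w, cdot (pi w) v = c w.
  move=> w; rewrite ev cdot_sumr; under eq_bigr do rewrite orth.
  rewrite (bigD1 w) //= eqxx mulr1 big1 ?addr0 // => w' ne.
  by rewrite eq_sym (negbTE ne) mulr0.
have -> : cdot v v = cdot v (fun e => \sum_w c w * pi w e) by rewrite -ev.
rewrite cdot_sumr; apply: eq_bigr => w _.
by rewrite -(cdot_conj (pi w) v) cw mulrC.
Qed.

Lemma parseval2 (S O E : finType) (pi : O -> E -> R[i]) (V : S * E -> R[i]) :
  onb_family pi ->
  \sum_w cdot (fun s => \sum_e conjc (pi w e) * V (s, e)) (fun s => \sum_e conjc (pi w e) * V (s, e))
  = cdot V V.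
Proof.
move=> H.
transitivity (\sum_s \sum_w conjc (cdot (pi w) (fun e => V (s, e))) * cdot (pi w) (fun e => V (s, e))).
  by rewrite exchange_big.
under eq_bigr do rewrite parseval //.
by rewrite /cdot pairsum.
Qed.
End T3.
Section T4.
Variable R : realType.
Local Notation RE := (@complex.Re R).
Local Notation IM := (@complex.Im R).

Lemma abs20 : abs2 (0 : R[i]) = 0.
Proof. by rewrite /abs2 /= expr2 mulr0 addr0. Qed.

Lemma qfi_gauge (I : finType) (F : R -> I -> R[i]) x :
  cdot (F x) (cderiv F x) = 0 -> QFI_pure F x = 4 * RE (cdot (cderiv F x) (cderiv F x)).
Proof. by move=> H; rewrite /QFI_pure H abs20 subr0. Qed.

Lemma cdot_scale (I : finType) (a b : I -> R[i]) (r : R) :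
  cdot (fun s => a s * r%:C) (fun s => b s * r%:C) = (r * r)%:C * cdot a b.
Proof.
rewrite /cdot mulr_sumr; apply: eq_bigr => s _; rewrite conjcM'.
have -> : conjc (r%:C) = r%:C by rewrite /= oppr0.
have -> : (r * r)%:C = r%:C * r%:C by rewrite /=; congr (_ +i* _); ring.
ring.
Qed.

Lemma reRM (r : R) (z : R[i]) : RE (r%:C * z) = r * RE z.
Proof. by rewrite reM /= mul0r subr0. Qed.

Lemma norm_qfi (I : finType) (f : R -> I -> R[i]) x :
  (forall s, cder (fun t => f t s) x (cderiv f x s)) ->
  cdot (f x) (cderiv f x) = 0 ->
  0 < RE (cdot (f x) (f x)) ->
  RE (cdot (f x) (f x)) *
    QFI_pure (fun t s => f t s * ((Num.sqrt (RE (cdot (f t) (f t))))^-1)%:C) x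
  = 4 * RE (cdot (cderiv f x) (cderiv f x)).
Proof.
move=> Hder Hi px.
set D := cderiv f x.
pose p := fun t => RE (cdot (f t) (f t)).
have Hc : cder (fun t => cdot (f t) (f t)) x (cdot (f x) D + cdot D (f x)).
  have -> : cdot (f x) D + cdot D (f x) =
     \sum_(s : I) (conjc (f x s) * D s + conjc (D s) * f x s).
    by rewrite big_split.
  apply: cder_sum => s; exact: cder_mul (cder_conj (Hder s)) (Hder s).
have hp : is_derive x 1 p 0.
  case: Hc => Hc _; move: Hc; rewrite -(cdot_conj (f x) D) Hi.
  by rewrite (_ : conjc (0 : R[i]) = 0) ?addr0 // /= oppr0.
have hs : is_derive x 1 (Num.sqrt \o p) 0.
  apply: is_derive_eq; first exact: is_derive1_comp (is_derive1_sqrt px) hp.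
  by rewrite mulr0.
have sn0 : Num.sqrt (p x) != 0 by rewrite lt0r_neq0 // sqrtr_gt0.
have hh : is_derive x 1 (fun t => (Num.sqrt (p t))^-1) 0.
  have := @is_deriveV _ (Num.sqrt \o p) x 0 1 sn0 hs.
  by rewrite scaler0.
set h := fun t => (Num.sqrt (p t))^-1.
have Hg : forall s, cder (fun t => f t s * (h t)%:C) x (D s * (h x)%:C).
  move=> s; have := cder_mul (Hder s) (cder_real hh).
  by rewrite (_ : (0:R)%:C = 0) // mulr0 add0r.
have eg : cderiv (fun t s => f t s * (h t)%:C) x = fun s => D s * (h x)%:C.
  apply/funext => s; exact: cder_cderiv (Hg s).
rewrite /QFI_pure.
rewrite -/p -/h eg.
rewrite (cdot_scale (f x) D (h x)) cdot_scale Hi mulr0 abs20 subr0 reRM.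
have -> : h x * h x = (p x)^-1.
  rewrite /h -invfM -expr2 sqr_sqrtr //; exact: order.Order.POrderTheory.ltW.
field; exact: lt0r_neq0.
Qed.
End T4.
Unset Implicit Arguments.
Lemma re0' (R : realType) : complex.Re (0 : R[i]) = 0. Proof. by []. Qed.

Theorem theorem1 (R : realType) (S E O : finType)
  (psi : S -> R[i]) (phi : E -> R[i])
  (U : R -> S * E -> S * E -> R[i]) (pi : O -> E -> R[i])
  (keep : {set O}) (x : R) :
  cdot psi psi = 1 ->
  cdot phi phi = 1 ->
  (forall t : R, unitary_op (U t)) ->
  C1_family U ->
  onb_family pi ->
  (* perpendicular gauge *)
  cdot (joint_state U psi phi x) (cderiv (joint_state U psi phi) x) = 0 ->
  (* (i) *)
  (forall w : O, w \in keep ->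
     cdot (post_state U psi phi pi w x) (cderiv (post_state U psi phi pi w) x) = 0) ->
  (* (ii) *)
  (forall w : O, w \notin keep ->
     forall s : S, cderiv (post_state U psi phi pi w) x s = 0) ->
  (forall w : O, w \in keep ->
     (exists s : S, cderiv (post_state U psi phi pi w) x s <> 0) ->
     0 < prob U psi phi pi w x) ->
  \sum_(w in keep | 0 < prob U psi phi pi w x)
      prob U psi phi pi w x * QFI_pure (normalized_post U psi phi pi w) x
  = QFI_pure (joint_state U psi phi) x.
Proof.
move=> Hpsi Hphi Hunit HC Hpi Hgauge Hi Hii Hpos.
have Pder : forall w s, cder (fun t => post_state U psi phi pi w t s) x
                          (cderiv (post_state U psi phi pi w) x s).
  by move=> w s; case: (post_der psi phi pi w x s HC).
have Peq : forall w, cderiv (post_state U psi phi pi w) x =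
    fun s => \sum_e conjc (pi w e) * cderiv (joint_state U psi phi) x (s, e).
  by move=> w; apply/funext => s; case: (post_der psi phi pi w x s HC).
rewrite qfi_gauge //.
have Hz : forall w, ~~ ((w \in keep) && (0 < prob U psi phi pi w x)) ->
    cdot (cderiv (post_state U psi phi pi w) x) (cderiv (post_state U psi phi pi w) x) = 0.
  move=> w Hw.
  suff Z : forall s, cderiv (post_state U psi phi pi w) x s = 0.
    by rewrite /cdot big1 // => s _; rewrite Z mulr0.
  case: (boolP (w \in keep)) => kw; last exact: Hii.
  rewrite kw /= in Hw; move=> s; apply/eqP; apply/negPn/negP => ne.
  move/negP: Hw; apply; apply: Hpos kw _; exists s; exact/eqP.
transitivity (\sum_(w | (w \in keep) && (0 < prob U psi phi pi w x))
   4 * complex.Re (cdot (cderiv (post_state U psi phi pi w) x)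
                        (cderiv (post_state U psi phi pi w) x))).
  apply: eq_bigr => w /andP [kw pw].
  exact: norm_qfi (Pder w) (Hi w kw) pw.
transitivity (\sum_w 4 * complex.Re (cdot (cderiv (post_state U psi phi pi w) x)
                        (cderiv (post_state U psi phi pi w) x))).
  rewrite [RHS](bigID (fun w => (w \in keep) && (0 < prob U psi phi pi w x))) /=.
  rewrite [X in _ = _ + X]big1 ?addr0 // => w Hw.
  by rewrite Hz // mulr0.
rewrite -mulr_sumr; congr (4 * _).
rewrite -(big_morph _ (@reD R) (re0' R)); congr complex.Re.
under eq_bigr do rewrite Peq.
exact: parseval2.
Qed.
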